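(* Let $(\mu_n)_{n\ge1}$ be a sequence of probability measures on $\mathbb{Z}$ such that (1) there exist $0<\alpha\le1$ and $C>0$ such that for all $n\ge1$, $|\mu_n(x+y)-\mu_n(x)|\le C\frac{|y|^{\alpha}}{|x|^{1+\alpha}}$ for all $x,y\in\mathbb{Z}$ with $2|y|\le|x|$; (2) $\hat{\mu}_n(t)\to0$ as $n\to\infty$ for almost every $t\in[-1/2,1/2)$. Then $\|\mu_n-\mu_n*\delta_1\|_1=\sum_{k\in\mathbb{Z}}|\mu_n(k)-\mu_n(k-1)|\to0$ as $n\to\infty$.
   Context: $\delta_1$ denotes the point mass at $1$, so $(\mu*\delta_1)(k)=\mu(k-1)$. The Fourier transform of a probability measure $\mu$ on $\mathbb{Z}$ is $\hat{\mu}(t)=\sum_{k\in\mathbb{Z}}\mu(k)e^{2\pi ikt}$, $t\in[-1/2,1/2)$. *)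

(* Defs.v *)
From Stdlib Require Export Reals ZArith.
Open Scope R_scope.

(* Sum over Z: sum_{k in Z} f k = l, as the limit of the nat-indexed series
   whose n-th term is f n + f (-n-1) (enumerating Z as 0,-1,1,-2,2,...). *)
Definition Zsum (f : Z -> R) (l : R) : Prop :=
  infinite_sum (fun n : nat => f (Z.of_nat n) + f (- Z.of_nat n - 1)%Z) l.

Definition prob_Z (mu : Z -> R) : Prop :=
  (forall k, 0 <= mu k) /\ Zsum mu 1.

(* x^a for x >= 0, with the convention 0^a = 0 (a > 0). *)
Definition rpow (x a : R) : R :=
  if Req_EM_T x 0 then 0 else Rpower x a.

Definition null_set (S : R -> Prop) : Prop :=
  forall eps, 0 < eps ->
  exists a b : nat -> R,
    (forall n, a n <= b n) /\
    (forall x, S x -> exists n, a n < x < b n) /\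
    (forall N, sum_f_R0 (fun n => b n - a n) N <= eps).

(* Real and imaginary parts of hat(mu)(t) = sum_k mu(k) e^{2 pi i k t}. *)
Definition fourier_re (mu : Z -> R) (t v : R) : Prop :=
  Zsum (fun k => mu k * cos (2 * PI * IZR k * t)) v.
Definition fourier_im (mu : Z -> R) (t v : R) : Prop :=
  Zsum (fun k => mu k * sin (2 * PI * IZR k * t)) v.

(* Main.v *)
Require Import Defs.
From Stdlib Require Import Lra Lia ClassicalEpsilon Classical.
From Stdlib Require Import Lra Lia ClassicalEpsilon Classical.

Lemma Rabs_bnd a b : Rabs a <= b -> - b <= a <= b.
Proof.
intros H. destruct (Rcase_abs a) as [h|h].
- rewrite Rabs_left in H by lra. lra.
- rewrite Rabs_right in H by lra. lra.
Qed.

Lemma Rabs_bnd' a b : Rabs a < b -> - b < a < b.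
Proof.
intros H. destruct (Rcase_abs a) as [h|h].
- rewrite Rabs_left in H by lra. lra.
- rewrite Rabs_right in H by lra. lra.
Qed.

Definition Lim (u : nat -> R) : R := epsilon (inhabits 0) (fun l => Un_cv u l).

Lemma Lim_spec u l : Un_cv u l -> Lim u = l.
Proof.
intros H. unfold Lim.
assert (Hex : exists l, Un_cv u l) by eauto.
pose proof (epsilon_spec (inhabits 0) _ Hex) as H2.
eapply UL_sequence; eauto.
Qed.

Lemma Lim_cv u : (exists l, Un_cv u l) -> Un_cv u (Lim u).
Proof. intros [l H]. rewrite (Lim_spec u l H). exact H. Qed.

Lemma Un_cv_ext (u v : nat -> R) l : (forall n, u n = v n) -> Un_cv u l -> Un_cv v l.
Proof.
intros E H eps Heps. destruct (H eps Heps) as [N HN]. exists N. intros n Hn.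
rewrite <- E. apply HN; auto.
Qed.

Lemma Un_cv_const c : Un_cv (fun _ => c) c.
Proof.
intros eps Heps. exists 0%nat. intros n _. unfold R_dist. rewrite Rminus_diag, Rabs_R0. lra.
Qed.

Lemma Un_cv_scal (u : nat -> R) l c : Un_cv u l -> Un_cv (fun n => c * u n) (c * l).
Proof. intros H. apply CV_mult; auto. apply Un_cv_const. Qed.

Lemma Un_cv_eventually (u : nat -> R) l N : (forall n, (n >= N)%nat -> u n = l) -> Un_cv u l.
Proof.
intros H eps Heps. exists N. intros n Hn. rewrite H by auto. unfold R_dist.
rewrite Rminus_diag, Rabs_R0. lra.
Qed.

Lemma Un_cv_shift (u : nat -> R) l : Un_cv (fun n => u (S n)) l -> Un_cv u l.
Proof.
intros H eps Heps. destruct (H eps Heps) as [N HN]. exists (S N). intros n Hn.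
destruct n as [|n]; [lia|]. apply HN. lia.
Qed.

Lemma lim_le_const (u : nat -> R) l B : Un_cv u l -> (forall n, u n <= B) -> l <= B.
Proof.
intros H HB. destruct (Rle_or_lt l B) as [h|h]; auto.
destruct (H (l - B)) as [N HN]; [lra|].
specialize (HN N (le_n N)). specialize (HB N). unfold R_dist in HN.
apply Rabs_def2 in HN. lra.
Qed.

Lemma lim_ge_const (u : nat -> R) l B : Un_cv u l -> (forall n, B <= u n) -> B <= l.
Proof.
intros H HB. destruct (Rle_or_lt B l) as [h|h]; auto.
destruct (H (B - l)) as [N HN]; [lra|].
specialize (HN N (le_n N)). specialize (HB N). unfold R_dist in HN.
apply Rabs_def2 in HN. lra.
Qed.

Lemma lim_abs_le (u : nat -> R) l B : Un_cv u l -> (forall n, Rabs (u n) <= B) -> Rabs l <= B.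
Proof.
intros H HB. apply Rabs_le. split.
- apply (lim_ge_const u); auto. intro n. specialize (HB n). apply Rabs_bnd in HB. lra.
- apply (lim_le_const u); auto. intro n. specialize (HB n). apply Rabs_bnd in HB. lra.
Qed.

Lemma dom_cv (T w : nat -> R) lw : (forall i, Rabs (T i) <= w i) ->
  Un_cv (sum_f_R0 w) lw -> exists l, Un_cv (sum_f_R0 T) l.
Proof.
intros HT Hw.
assert (H1 : {l | Un_cv (fun N => sum_f_R0 (fun i => T i + w i) N) l}).
{ apply Rseries_CV_comp with (Bn := fun i => w i * 2).
  - intro i. specialize (HT i). apply Rabs_bnd in HT. lra.
  - exists (2 * lw). apply Un_cv_ext with (u := fun N => 2 * sum_f_R0 w N).
    + intro n. apply scal_sum.
    + apply Un_cv_scal. exact Hw. }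
destruct H1 as [l1 H1]. exists (l1 - lw).
apply Un_cv_ext with (u := fun N => sum_f_R0 (fun i => T i + w i) N - sum_f_R0 w N).
- intro n. rewrite <- minus_sum. apply sum_eq. intros. ring.
- apply CV_minus; auto.
Qed.

Lemma sum_nonneg_le_lim (w : nat -> R) l : (forall i, 0 <= w i) -> Un_cv (sum_f_R0 w) l ->
  forall M, sum_f_R0 w M <= l.
Proof.
intros Hw H M. apply growing_ineq; auto.
intro n. simpl. specialize (Hw (S n)). lra.
Qed.

Lemma null_set_add_pt (N : R -> Prop) p : null_set N -> null_set (fun t => N t \/ t = p).
Proof.
intros HN eps Heps.
destruct (HN (eps/2)) as [a [b [Hab [Hcov Hsum]]]]; [lra|].
exists (fun n => match n with O => p - eps/4 | S n => a n end).
exists (fun n => match n with O => p + eps/4 | S n => b n end).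
split; [|split].
- intros [|n]; [lra|apply Hab].
- intros x [Nx|Ex].
  + destruct (Hcov x Nx) as [n Hn]. exists (S n). exact Hn.
  + exists O. subst. lra.
- intros [|K].
  + simpl. lra.
  + rewrite decomp_sum by lia. simpl pred.
    specialize (Hsum K). lra.
Qed.

Definition wt (nu : Z -> R) (i : nat) : R := nu (Z.of_nat i) + nu (- Z.of_nat i - 1)%Z.

Definition Tm (g : Z -> R) (nu : Z -> R) (i : nat) : R :=
  nu (Z.of_nat i) * g (Z.of_nat i) + nu (- Z.of_nat i - 1)%Z * g (- Z.of_nat i - 1)%Z.

Definition ck (k : Z) (t : R) (j : Z) : R := cos (2 * PI * IZR (j - k) * t).

Definition Pk (nu : Z -> R) (k : Z) (M : nat) (t : R) : R := sum_f_R0 (Tm (ck k t) nu) M.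

Definition Gk (nu : Z -> R) (k : Z) (t : R) : R := Lim (fun M => Pk nu k M t).

Lemma Tm_bound (g : Z -> R) nu i : (forall j, 0 <= nu j) -> (forall j, Rabs (g j) <= 1) ->
  Rabs (Tm g nu i) <= wt nu i.
Proof.
intros Hnu Hg. unfold Tm, wt.
eapply Rle_trans; [apply Rabs_triang|].
rewrite !Rabs_mult.
rewrite (Rabs_right (nu (Z.of_nat i))) by (apply Rle_ge; auto).
rewrite (Rabs_right (nu (- Z.of_nat i - 1)%Z)) by (apply Rle_ge; auto).
pose proof (Hg (Z.of_nat i)). pose proof (Hg (- Z.of_nat i - 1)%Z).
pose proof (Hnu (Z.of_nat i)). pose proof (Hnu (- Z.of_nat i - 1)%Z).
apply Rplus_le_compat.
- rewrite <- (Rmult_1_r (nu (Z.of_nat i))) at 2. apply Rmult_le_compat_l; auto.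
- rewrite <- (Rmult_1_r (nu (- Z.of_nat i - 1)%Z)) at 2. apply Rmult_le_compat_l; auto.
Qed.

Lemma ck_bound k t j : Rabs (ck k t j) <= 1.
Proof. unfold ck. apply Rabs_le. apply COS_bound. Qed.

Lemma wt_nonneg nu i : (forall j, 0 <= nu j) -> 0 <= wt nu i.
Proof. intros H. unfold wt. pose proof (H (Z.of_nat i)). pose proof (H (- Z.of_nat i - 1)%Z). lra. Qed.

Lemma Pk_cv nu k t : prob_Z nu -> Un_cv (fun M => Pk nu k M t) (Gk nu k t).
Proof.
intros [Hnu H1]. unfold Gk. apply Lim_cv.
apply (dom_cv _ (wt nu) 1).
- intro i. apply Tm_bound; auto. intro. apply ck_bound.
- exact H1.
Qed.

Lemma Pk_bound nu k M t : prob_Z nu -> Rabs (Pk nu k M t) <= 1.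
Proof.
intros [Hnu H1]. unfold Pk.
eapply Rle_trans; [apply sum_f_R0_triangle|].
apply Rle_trans with (sum_f_R0 (wt nu) M).
- apply sum_Rle. intros. apply Tm_bound; auto. intro; apply ck_bound.
- apply (sum_nonneg_le_lim (wt nu) 1); auto. intro; apply wt_nonneg; auto.
Qed.

Lemma Gk_bound nu k t : prob_Z nu -> Rabs (Gk nu k t) <= 1.
Proof.
intros Hp. apply (lim_abs_le (fun M => Pk nu k M t)).
- apply Pk_cv; auto.
- intro; apply Pk_bound; auto.
Qed.

Lemma ck_cont k j t : continuity_pt (fun t => ck k t j) t.
Proof.
unfold ck.
apply (continuity_pt_comp (fun t => 2 * PI * IZR (j - k) * t) cos).
- apply continuity_pt_mult; [apply continuity_pt_const; intros ? ?; reflexivity| apply derivable_continuous_pt, derivable_pt_id].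
- apply continuity_cos.
Qed.

Lemma Pk_cont nu k M t : continuity_pt (Pk nu k M) t.
Proof.
induction M as [|M IH].
- unfold Pk, Tm. simpl.
  apply continuity_pt_plus; apply continuity_pt_mult;
    try (apply continuity_pt_const; intros ? ?; reflexivity); apply ck_cont.
- unfold Pk. simpl.
  apply continuity_pt_plus; [exact IH|].
  unfold Tm.
  apply continuity_pt_plus; apply continuity_pt_mult;
    try (apply continuity_pt_const; intros ? ?; reflexivity); apply ck_cont.
Qed.

Lemma dpl_ext (f g : R -> R) x l : (forall y, f y = g y) -> derivable_pt_lim f x l -> derivable_pt_lim g x l.
Proof.
intros E H eps Heps. destruct (H eps Heps) as [d Hd]. exists d. intros h H0 H1.
rewrite <- !E. apply Hd; auto.
Qed.

Definition Af (m : Z) (t : R) : R :=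
  if Z.eq_dec m 0 then t else sin (2 * PI * IZR m * t) / (2 * PI * IZR m).

Lemma Af_deriv m t : derivable_pt_lim (Af m) t (cos (2 * PI * IZR m * t)).
Proof.
unfold Af. destruct (Z.eq_dec m 0) as [->|Hm].
- replace (cos (2 * PI * IZR 0 * t)) with 1 by (rewrite Rmult_0_r, Rmult_0_l, cos_0; reflexivity).
  apply derivable_pt_lim_id.
- assert (Hc : 2 * PI * IZR m <> 0).
  { apply Rmult_integral_contrapositive; split.
    - pose proof PI_RGT_0; lra.
    - apply not_0_IZR; auto. }
  set (c := 2 * PI * IZR m) in *.
  apply dpl_ext with (f := mult_real_fct (/ c) (comp sin (fun t => c * t))).
  { intro y. unfold mult_real_fct, comp. unfold Rdiv. ring. }
  replace (cos (c * t)) with (/ c * (cos (c * t) * c)) by (field; auto).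
  apply derivable_pt_lim_scal.
  apply derivable_pt_lim_comp.
  + apply dpl_ext with (f := mult_real_fct c id).
    { intro y. reflexivity. }
    replace c with (c * 1) at 2 by ring.
    apply derivable_pt_lim_scal. apply derivable_pt_lim_id.
  + apply derivable_pt_lim_sin.
Qed.

Lemma Af_diff m : Af m (1/2) - Af m (-(1/2)) = if Z.eq_dec m 0 then 1 else 0.
Proof.
unfold Af. destruct (Z.eq_dec m 0) as [->|Hm]; [lra|].
rewrite (sin_eq_0_1 (2 * PI * IZR m * (1/2))).
2: { exists m. field. }
rewrite (sin_eq_0_1 (2 * PI * IZR m * (-(1/2)))).
2: { exists (- m)%Z. rewrite opp_IZR. field. }
unfold Rdiv. ring.
Qed.

Definition Qk (nu : Z -> R) (k : Z) (M : nat) (t : R) : R :=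
  sum_f_R0 (fun i => nu (Z.of_nat i) * Af (Z.of_nat i - k) t
                     + nu (- Z.of_nat i - 1)%Z * Af (- Z.of_nat i - 1 - k) t) M.

Lemma Qk_deriv nu k M t : derivable_pt_lim (Qk nu k M) t (Pk nu k M t).
Proof.
assert (Hterm : forall i, derivable_pt_lim
   (fun t => nu (Z.of_nat i) * Af (Z.of_nat i - k) t
                     + nu (- Z.of_nat i - 1)%Z * Af (- Z.of_nat i - 1 - k) t) t
   (Tm (ck k t) nu i)).
{ intro i. unfold Tm, ck.
  apply dpl_ext with (f := (mult_real_fct (nu (Z.of_nat i)) (Af (Z.of_nat i - k)) +
       mult_real_fct (nu (- Z.of_nat i - 1)%Z) (Af (- Z.of_nat i - 1 - k)))%F).
  { intro y. reflexivity. }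
  apply derivable_pt_lim_plus; apply derivable_pt_lim_scal; apply Af_deriv. }
induction M as [|M IH].
- apply dpl_ext with (f := fun t => nu (Z.of_nat 0) * Af (Z.of_nat 0 - k) t
                     + nu (- Z.of_nat 0 - 1)%Z * Af (- Z.of_nat 0 - 1 - k) t).
  { intro y. reflexivity. }
  apply (Hterm 0%nat).
- change (Pk nu k (S M) t) with (Pk nu k M t + Tm (ck k t) nu (S M)).
  apply dpl_ext with (f := plus_fct (Qk nu k M) (fun t => nu (Z.of_nat (S M)) * Af (Z.of_nat (S M) - k) t
                     + nu (- Z.of_nat (S M) - 1)%Z * Af (- Z.of_nat (S M) - 1 - k) t)).
  { intro y. reflexivity. }
  apply derivable_pt_lim_plus; [apply IH| apply Hterm].
Qed.

Definition idx (k : Z) : nat := if Z_le_dec 0 k then Z.to_nat k else Z.to_nat (- k - 1).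

Lemma sum_delta (c : R) p M : (p <= M)%nat ->
  sum_f_R0 (fun i => if Nat.eq_dec i p then c else 0) M = c.
Proof.
induction M as [|M IH]; intros H.
- assert (p = 0%nat) by lia. subst. simpl. reflexivity.
- destruct (Nat.eq_dec p (S M)) as [->|Hp].
  + rewrite tech5. rewrite sum_eq_R0.
    * destruct (Nat.eq_dec (S M) (S M)); [ring|congruence].
    * intros n Hn. destruct (Nat.eq_dec n (S M)); [lia|reflexivity].
  + rewrite tech5. rewrite IH by lia. destruct (Nat.eq_dec (S M) p); [lia|ring].
Qed.

Lemma Qk_diff nu k M : (idx k <= M)%nat -> Qk nu k M (1/2) - Qk nu k M (-(1/2)) = nu k.
Proof.
intros H. unfold Qk. rewrite <- minus_sum.
rewrite <- (sum_delta (nu k) (idx k) M H).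
apply sum_eq. intros i _.
replace (nu (Z.of_nat i) * Af (Z.of_nat i - k) (1 / 2) +
   nu (- Z.of_nat i - 1)%Z * Af (- Z.of_nat i - 1 - k) (1 / 2) -
   (nu (Z.of_nat i) * Af (Z.of_nat i - k) (- (1 / 2)) +
    nu (- Z.of_nat i - 1)%Z * Af (- Z.of_nat i - 1 - k) (- (1 / 2))))
 with (nu (Z.of_nat i) * (Af (Z.of_nat i - k) (1 / 2) - Af (Z.of_nat i - k) (- (1 / 2))) +
   nu (- Z.of_nat i - 1)%Z * (Af (- Z.of_nat i - 1 - k) (1 / 2) - Af (- Z.of_nat i - 1 - k) (- (1 / 2))))
 by ring.
rewrite !Af_diff. unfold idx.
destruct (Z_le_dec 0 k) as [hk|hk];
destruct (Z.eq_dec (Z.of_nat i - k) 0) as [h1|h1];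
destruct (Z.eq_dec (- Z.of_nat i - 1 - k) 0) as [h2|h2];
destruct (Nat.eq_dec i _) as [h3|h3]; try lia.
- replace k with (Z.of_nat i) by lia. ring.
- ring.
- replace k with (- Z.of_nat i - 1)%Z by lia. ring.
- ring.
Qed.

Lemma ck_split k t j : ck k t j = cos (2 * PI * IZR j * t) * cos (2 * PI * IZR k * t)
   + sin (2 * PI * IZR j * t) * sin (2 * PI * IZR k * t).
Proof.
unfold ck. rewrite minus_IZR.
replace (2 * PI * (IZR j - IZR k) * t) with (2 * PI * IZR j * t - 2 * PI * IZR k * t) by ring.
apply cos_minus.
Qed.

Lemma Gk_fourier nu k t re im : prob_Z nu -> fourier_re nu t re -> fourier_im nu t im ->
  Gk nu k t = cos (2 * PI * IZR k * t) * re + sin (2 * PI * IZR k * t) * im.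
Proof.
intros Hp Hre Him. unfold Gk. apply Lim_spec.
set (c := cos (2 * PI * IZR k * t)). set (s := sin (2 * PI * IZR k * t)).
unfold fourier_re, fourier_im, Zsum in *.
apply Un_cv_ext with (u := fun M => c * sum_f_R0 (fun n => nu (Z.of_nat n) * cos (2 * PI * IZR (Z.of_nat n) * t) +
      nu (- Z.of_nat n - 1)%Z * cos (2 * PI * IZR (- Z.of_nat n - 1) * t)) M
  + s * sum_f_R0 (fun n => nu (Z.of_nat n) * sin (2 * PI * IZR (Z.of_nat n) * t) +
      nu (- Z.of_nat n - 1)%Z * sin (2 * PI * IZR (- Z.of_nat n - 1) * t)) M).
- intro M. unfold Pk. rewrite !scal_sum, <- plus_sum. apply sum_eq. intros i _.
  unfold Tm. rewrite !ck_split. fold c s. ring.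
- apply CV_plus; apply Un_cv_scal; assumption.
Qed.

Lemma null_set_empty : null_set (fun _ => False).
Proof.
intros eps Heps. exists (fun _ => 0), (fun _ => 0). split; [|split].
- intros; lra.
- intros x [].
- intros K. rewrite sum_eq_R0; [lra|]. intros; ring.
Qed.

Lemma mu_k_to_0 (mf : (R -> R) -> Prop) (RI : R -> R -> (R -> R) -> R)
 (mf_cont : forall f, (forall x, continuity_pt f x) -> mf f)
 (mf_lim : forall (fs : nat -> R -> R) f, (forall n, mf (fs n)) ->
     (forall t, Un_cv (fun n => fs n t) (f t)) -> mf f)
 (FTC : forall F f a b, a < b -> (forall x, derivable_pt_lim F x (f x)) ->
     (forall x, continuity_pt f x) -> RI a b f = F b - F a)
 (DCT : forall a b (fs : nat -> R -> R) f N, null_set N -> (forall n, mf (fs n)) -> mf f ->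
     (forall n t, Rabs (fs n t) <= 1) ->
     (forall t, a <= t <= b -> ~ N t -> Un_cv (fun n => fs n t) (f t)) ->
     Un_cv (fun n => RI a b (fs n)) (RI a b f))
 (nu : nat -> Z -> R) (Hprob : forall n, prob_Z (nu n)) (N : R -> Prop) (HN : null_set N)
 (H2 : forall t, -(1/2) <= t < 1/2 -> ~ N t -> exists re im : nat -> R,
     (forall n, fourier_re (nu n) t (re n)) /\ (forall n, fourier_im (nu n) t (im n)) /\
     Un_cv re 0 /\ Un_cv im 0)
 (k : Z) : Un_cv (fun n => nu n k) 0.
Proof.
assert (mfP : forall n M, mf (Pk (nu n) k M)).
{ intros n M. apply mf_cont. intro; apply Pk_cont. }
assert (mfG : forall n, mf (Gk (nu n) k)).
{ intro n. apply (mf_lim (fun M => Pk (nu n) k M)); auto.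
  intro t. apply Pk_cv; auto. }
assert (intP : forall n M, (idx k <= M)%nat -> RI (-(1/2)) (1/2) (Pk (nu n) k M) = nu n k).
{ intros n M HM. rewrite (FTC (Qk (nu n) k M)); [apply Qk_diff; auto|lra| |].
  - intro; apply Qk_deriv.
  - intro; apply Pk_cont. }
assert (intG : forall n, RI (-(1/2)) (1/2) (Gk (nu n) k) = nu n k).
{ intro n.
  assert (H := DCT (-(1/2)) (1/2) (fun M => Pk (nu n) k M) (Gk (nu n) k) (fun _ => False)
     null_set_empty (mfP n) (mfG n)).
  assert (H' : Un_cv (fun M => RI (-(1/2)) (1/2) (Pk (nu n) k M)) (RI (-(1/2)) (1/2) (Gk (nu n) k))).
  { apply H.
    - intros; apply Pk_bound; auto.
    - intros t _ _. apply Pk_cv; auto. }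
  apply (UL_sequence _ _ _ H').
  apply (Un_cv_eventually _ _ (idx k)). intros M HM. apply intP. lia. }
assert (RI0 : RI (-(1/2)) (1/2) (fun _ => 0) = 0).
{ rewrite (FTC (fun _ => 0)); [ring|lra| |].
  - intro x. apply derivable_pt_lim_const.
  - intro x. apply continuity_pt_const. intros ? ?; reflexivity. }
apply Un_cv_ext with (u := fun n => RI (-(1/2)) (1/2) (Gk (nu n) k)).
{ intro n. apply intG. }
rewrite <- RI0.
apply (DCT (-(1/2)) (1/2) (fun n => Gk (nu n) k) (fun _ => 0) (fun t => N t \/ t = 1/2)).
- apply null_set_add_pt; auto.
- exact mfG.
- apply mf_cont. intros x. apply continuity_pt_const. intros ? ?; reflexivity.
- intros n t. apply Gk_bound; auto.
- intros t Ht HNt.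
  assert (Ht' : -(1/2) <= t < 1/2).
  { split; [lra|]. destruct Ht as [_ Ht]. destruct Ht as [Ht|Ht]; auto.
    exfalso; apply HNt; right; auto. }
  destruct (H2 t Ht' (fun h => HNt (or_introl h))) as [re [im [Hre [Him [Cre Cim]]]]].
  apply Un_cv_ext with (u := fun n => cos (2 * PI * IZR k * t) * re n + sin (2 * PI * IZR k * t) * im n).
  { intro n. symmetry. apply Gk_fourier; auto. }
  replace 0 with (cos (2 * PI * IZR k * t) * 0 + sin (2 * PI * IZR k * t) * 0) by ring.
  apply CV_plus; apply Un_cv_scal; auto.
Qed.

Lemma ln_le_sub1 y : 0 < y -> ln y <= y - 1.
Proof.
intros Hy. pose proof (exp_ineq1_le (ln y)). rewrite exp_ln in H by auto. lra.
Qed.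

Lemma tele (a x : R) : 0 < a -> 1 < x ->
  / Rpower x (1 + a) <= (/ Rpower (x - 1) a - / Rpower x a) / a.
Proof.
intros Ha Hx.
rewrite Rpower_plus, Rpower_1 by lra.
unfold Rpower.
set (E := exp (a * ln x)).
assert (HE : 0 < E) by apply exp_pos.
assert (Hln : ln (x - 1) <= ln x - 1 / x).
{ replace (x - 1) with (x * ((x - 1) / x)) by (field; lra).
  rewrite ln_mult by (try apply Rdiv_lt_0_compat; lra).
  pose proof (ln_le_sub1 ((x - 1) / x)).
  assert (((x - 1) / x) - 1 = - (1 / x)) by (field; lra).
  assert (0 < (x - 1) / x) by (apply Rdiv_lt_0_compat; lra).
  lra. }
assert (HF : / E * (1 + a / x) <= / exp (a * ln (x - 1))).
{ rewrite <- exp_Ropp. unfold E. rewrite <- exp_Ropp.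
  apply Rle_trans with (exp (- (a * ln x)) * exp (a / x)).
  - apply Rmult_le_compat_l; [left; apply exp_pos|]. apply exp_ineq1_le.
  - rewrite <- exp_plus. destruct (Req_dec (- (a * ln x) + a / x) (- (a * ln (x - 1)))) as [e|e].
    + rewrite e; lra.
    + left. apply exp_increasing.
      assert (a * ln (x - 1) <= a * (ln x - 1 / x)) by (apply Rmult_le_compat_l; lra).
      assert (a * (ln x - 1/x) = a * ln x - a / x) by (field; lra).
      lra. }
apply Rle_trans with ((/ E * (1 + a / x) - / E) / a).
- right. field. split; lra.
- unfold Rdiv. apply Rmult_le_compat_r.
  + left; apply Rinv_0_lt_compat; auto.
  + fold E. lra.
Qed.

Section Comb.
End Comb.

Definition ee (mu : nat -> Z -> R) (n i : nat) : R :=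
  Rabs (mu n (Z.of_nat i) - mu n (Z.of_nat i - 1)%Z) +
  Rabs (mu n (- Z.of_nat i - 1)%Z - mu n (- Z.of_nat i - 1 - 1)%Z).

Lemma ee_nonneg mu n i : 0 <= ee mu n i.
Proof. unfold ee. pose proof (Rabs_pos (mu n (Z.of_nat i) - mu n (Z.of_nat i - 1)%Z)).
pose proof (Rabs_pos (mu n (- Z.of_nat i - 1)%Z - mu n (- Z.of_nat i - 1 - 1)%Z)). lra. Qed.

Lemma rpow_1 a : rpow (Rabs (IZR 1)) a = 1.
Proof.
unfold rpow. rewrite Rabs_R1. destruct (Req_EM_T 1 0) as [h|h]; [lra|].
unfold Rpower. rewrite ln_1, Rmult_0_r. apply exp_0.
Qed.

Lemma rpow_pos x a : 0 < x -> rpow x a = Rpower x a.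
Proof. intros H. unfold rpow. destruct (Req_EM_T x 0); [lra|reflexivity]. Qed.

Lemma Rpower_pos x a : 0 < Rpower x a.
Proof. unfold Rpower. apply exp_pos. Qed.

Definition beta (a y : R) : R := / Rpower y a.

Lemma beta_nonneg a y : 0 <= beta a y.
Proof. unfold beta. left. apply Rinv_0_lt_compat, Rpower_pos. Qed.

Lemma ee_tail (mu : nat -> Z -> R) (a C : R) (Ha : 0 < a) (HC : 0 < C) n
  (Hb : forall x y : Z, 2 * Rabs (IZR y) <= Rabs (IZR x) ->
       Rabs (mu n (x + y)%Z - mu n x) <= C * rpow (Rabs (IZR y)) a / rpow (Rabs (IZR x)) (1 + a))
  (i : nat) : (3 <= i)%nat ->
  ee mu n i <= 2 * C / a * (beta a (INR i - 2) - beta a (INR i - 1)).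
Proof.
intros Hi.
assert (HiR : 3 <= INR i) by (replace 3 with (INR 3) by (simpl; ring); apply le_INR; lia).
assert (Hx : forall x : Z, 2 <= Rabs (IZR x) ->
   Rabs (mu n (x + 1)%Z - mu n x) <= C / Rpower (Rabs (IZR x)) (1 + a)).
{ intros x H. specialize (Hb x 1%Z). rewrite rpow_1 in Hb.
  rewrite rpow_pos in Hb by lra. unfold Rdiv in *. rewrite Rmult_1_r in Hb. apply Hb.
  rewrite Rabs_R1. lra. }
assert (E1 : Rabs (mu n (Z.of_nat i) - mu n (Z.of_nat i - 1)%Z) <= C / Rpower (INR i - 1) (1 + a)).
{ specialize (Hx (Z.of_nat i - 1)%Z).
  replace (Z.of_nat i - 1 + 1)%Z with (Z.of_nat i) in Hx by lia.
  rewrite minus_IZR, <- INR_IZR_INZ, Rabs_right in Hx by lra.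
  apply Hx. lra. }
assert (E2 : Rabs (mu n (- Z.of_nat i - 1)%Z - mu n (- Z.of_nat i - 1 - 1)%Z) <= C / Rpower (INR i + 2) (1 + a)).
{ specialize (Hx (- Z.of_nat i - 2)%Z).
  replace (- Z.of_nat i - 2 + 1)%Z with (- Z.of_nat i - 1)%Z in Hx by lia.
  replace (- Z.of_nat i - 1 - 1)%Z with (- Z.of_nat i - 2)%Z by lia.
  rewrite minus_IZR, opp_IZR, <- INR_IZR_INZ in Hx.
  rewrite Rabs_left in Hx by lra.
  replace (- (- INR i - 2)) with (INR i + 2) in Hx by ring.
  apply Hx. lra. }
assert (E3 : C / Rpower (INR i + 2) (1 + a) <= C / Rpower (INR i - 1) (1 + a)).
{ unfold Rdiv. apply Rmult_le_compat_l; [lra|].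
  apply Rinv_le_contravar; [apply Rpower_pos|].
  apply Rle_Rpower_l; lra. }
assert (E4 : / Rpower (INR i - 1) (1 + a) <= (beta a (INR i - 2) - beta a (INR i - 1)) / a).
{ unfold beta. replace (INR i - 2) with (INR i - 1 - 1) by ring. apply tele; lra. }
unfold ee.
apply Rle_trans with (2 * (C / Rpower (INR i - 1) (1 + a))); [lra|].
replace (2 * C / a * (beta a (INR i - 2) - beta a (INR i - 1)))
  with (2 * C * ((beta a (INR i - 2) - beta a (INR i - 1)) / a)) by (field; lra).
unfold Rdiv at 1. rewrite <- Rmult_assoc.
apply Rmult_le_compat_l; lra.
Qed.

Lemma ee_tail_sum (mu : nat -> Z -> R) (a C : R) (Ha : 0 < a) (HC : 0 < C) n
  (Hb : forall x y : Z, 2 * Rabs (IZR y) <= Rabs (IZR x) ->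
       Rabs (mu n (x + y)%Z - mu n x) <= C * rpow (Rabs (IZR y)) a / rpow (Rabs (IZR x)) (1 + a))
  (M : nat) : (2 <= M)%nat -> forall j,
  sum_f_R0 (ee mu n) (M + j) - sum_f_R0 (ee mu n) M <= 2 * C / a * (beta a (INR M - 1) - beta a (INR (M + j) - 1)).
Proof.
intros HM j. induction j as [|j IH].
- rewrite Nat.add_0_r. lra.
- rewrite Nat.add_succ_r, tech5.
  pose proof (ee_tail mu a C Ha HC n Hb (S (M + j))) as T.
  rewrite S_INR in T. replace (INR (M + j) + 1 - 2) with (INR (M + j) - 1) in T by ring.
  replace (INR (M + j) + 1 - 1) with (INR (M + j)) in T by ring.
  rewrite S_INR. replace (INR (M + j) + 1 - 1) with (INR (M + j)) by ring.
  assert (3 <= S (M + j))%nat by lia.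
  specialize (T H). lra.
Qed.

Lemma ee_tail_bound (mu : nat -> Z -> R) (a C : R) (Ha : 0 < a) (HC : 0 < C) n
  (Hb : forall x y : Z, 2 * Rabs (IZR y) <= Rabs (IZR x) ->
       Rabs (mu n (x + y)%Z - mu n x) <= C * rpow (Rabs (IZR y)) a / rpow (Rabs (IZR x)) (1 + a))
  (M : nat) : (2 <= M)%nat -> forall K,
  sum_f_R0 (ee mu n) K <= sum_f_R0 (ee mu n) M + 2 * C / a * beta a (INR M - 1).
Proof.
intros HM K.
assert (B0 : 0 <= 2 * C / a * beta a (INR M - 1)).
{ apply Rmult_le_pos; [unfold Rdiv; apply Rmult_le_pos; [lra|left; apply Rinv_0_lt_compat; lra]|apply beta_nonneg]. }
destruct (le_lt_dec M K) as [h|h].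
- replace K with (M + (K - M))%nat by lia.
  pose proof (ee_tail_sum mu a C Ha HC n Hb M HM (K - M)).
  pose proof (beta_nonneg a (INR (M + (K - M)) - 1)).
  assert (2 * C / a * (beta a (INR M - 1) - beta a (INR (M + (K - M)) - 1)) <= 2 * C / a * beta a (INR M - 1)).
  { assert (0 <= 2 * C / a) by (unfold Rdiv; apply Rmult_le_pos; [lra|left; apply Rinv_0_lt_compat; lra]).
    apply Rmult_le_compat_l; lra. }
  lra.
- assert (sum_f_R0 (ee mu n) K <= sum_f_R0 (ee mu n) M).
  { replace M with (K + (M - K))%nat by lia. generalize (M - K)%nat. intro j.
    induction j as [|j IH]; [rewrite Nat.add_0_r; lra|].
    rewrite Nat.add_succ_r, tech5. pose proof (ee_nonneg mu n (S (K + j))). lra. }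
  lra.
Qed.

Lemma Un_cv_abs0 (u : nat -> R) : Un_cv u 0 -> Un_cv (fun n => Rabs (u n)) 0.
Proof.
intros H eps Heps. destruct (H eps Heps) as [N HN]. exists N. intros n Hn.
specialize (HN n Hn). unfold R_dist in *. rewrite Rminus_0_r in *. rewrite Rabs_Rabsolu. exact HN.
Qed.

Lemma ee_cv0 mu (mk : forall k, Un_cv (fun n => mu n k) 0) M :
  Un_cv (fun n => sum_f_R0 (ee mu n) M) 0.
Proof.
assert (He : forall i, Un_cv (fun n => ee mu n i) 0).
{ intro i. unfold ee. replace 0 with (0 + 0) by ring.
  apply CV_plus; apply Un_cv_abs0; replace 0 with (0 - 0) by ring; apply CV_minus; apply mk. }
induction M as [|M IH].
- simpl. apply He.
- apply Un_cv_ext with (u := fun n => sum_f_R0 (ee mu n) M + ee mu n (S M)).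
  + intro n. reflexivity.
  + replace 0 with (0 + 0) by ring. apply CV_plus; auto.
Qed.

Lemma beta_small a d : 0 < a -> 0 < d -> exists M : nat, (2 <= M)%nat /\ beta a (INR M - 1) < d.
Proof.
intros Ha Hd.
set (z := Rpower (2 / d) (/ a)).
assert (Hz : 0 < z) by apply Rpower_pos.
destruct (archimed z) as [Hup _].
exists (Z.to_nat (up z) + 2)%nat. split; [lia|].
assert (Hup0 : (0 < up z)%Z) by (apply lt_IZR; lra).
rewrite plus_INR, INR_IZR_INZ, Z2Nat.id by lia. replace (INR 2) with 2 by (simpl; ring).
unfold beta.
assert (Hy : z < IZR (up z) + 2 - 1) by lra.
assert (Rpower z a = 2 / d).
{ unfold z. rewrite Rpower_mult. replace (/ a * a) with 1 by (field; lra).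
  apply Rpower_1. apply Rdiv_lt_0_compat; lra. }
assert (Rpower z a < Rpower (IZR (up z) + 2 - 1) a) by (apply Rlt_Rpower_l; lra).
apply Rlt_le_trans with (/ (2 / d)).
- apply Rinv_lt_contravar; [|lra]. apply Rmult_lt_0_compat; [apply Rdiv_lt_0_compat; lra|apply Rpower_pos].
- replace (/ (2 / d)) with (d / 2) by (field; lra). lra.
Qed.

Lemma final_comb (mu : nat -> Z -> R)
  (Hprob : forall n, (1 <= n)%nat -> prob_Z (mu n))
  (a C : R) (Ha : 0 < a) (HC : 0 < C)
  (Hb : forall n, (1 <= n)%nat -> forall x y : Z, 2 * Rabs (IZR y) <= Rabs (IZR x) ->
       Rabs (mu n (x + y)%Z - mu n x) <= C * rpow (Rabs (IZR y)) a / rpow (Rabs (IZR x)) (1 + a))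
  (mk : forall k, Un_cv (fun n => mu n k) 0) :
  exists L : nat -> R,
    (forall n, (1 <= n)%nat -> Zsum (fun k => Rabs (mu n k - mu n (k - 1)%Z)) (L n)) /\
    Un_cv L 0.
Proof.
exists (fun n => Lim (sum_f_R0 (ee mu n))).
assert (Hex : forall n, (1 <= n)%nat -> Un_cv (sum_f_R0 (ee mu n)) (Lim (sum_f_R0 (ee mu n)))).
{ intros n Hn. apply Lim_cv.
  destruct (growing_cv (sum_f_R0 (ee mu n))) as [l Hl].
  - intro m. simpl. pose proof (ee_nonneg mu n (S m)). lra.
  - exists (sum_f_R0 (ee mu n) 2 + 2 * C / a * beta a (INR 2 - 1)).
    intros x [K ->]. apply (ee_tail_bound mu a C Ha HC n (Hb n Hn) 2); lia.
  - exists l; exact Hl. }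
split.
- intros n Hn. exact (Hex n Hn).
- intros eps Heps.
  destruct (beta_small a (eps * a / (8 * C))) as [M [HM HbM]]; auto.
  { apply Rdiv_lt_0_compat; [apply Rmult_lt_0_compat|]; lra. }
  destruct (ee_cv0 mu mk M (eps / 4)) as [N HN]; [lra|].
  exists (max N 1). intros n Hn.
  assert (Hn1 : (1 <= n)%nat) by lia.
  specialize (HN n ltac:(lia)). unfold R_dist in HN. rewrite Rminus_0_r in HN.
  apply Rabs_bnd' in HN.
  assert (Hbnd : forall K, sum_f_R0 (ee mu n) K <= sum_f_R0 (ee mu n) M + 2 * C / a * beta a (INR M - 1)).
  { apply (ee_tail_bound mu a C Ha HC n (Hb n Hn1)); auto. }
  assert (T : 2 * C / a * beta a (INR M - 1) <= eps / 4).
  { apply Rle_trans with (2 * C / a * (eps * a / (8 * C))).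
    - apply Rmult_le_compat_l; [unfold Rdiv; apply Rmult_le_pos; [lra|left; apply Rinv_0_lt_compat; lra]|lra].
    - right. field. split; lra. }
  assert (U : Lim (sum_f_R0 (ee mu n)) <= eps / 2).
  { apply (lim_le_const (sum_f_R0 (ee mu n))); [apply Hex; auto|]. intro K. specialize (Hbnd K). lra. }
  assert (V : 0 <= Lim (sum_f_R0 (ee mu n))).
  { apply (lim_ge_const (sum_f_R0 (ee mu n))); [apply Hex; auto|]. intro K.
    apply cond_pos_sum. intro; apply ee_nonneg. }
  unfold R_dist. rewrite Rminus_0_r, Rabs_right by lra. lra.
Qed.

Lemma Un_cv_Sshift (u : nat -> R) l : Un_cv u l -> Un_cv (fun n => u (S n)) l.
Proof.
intros H eps Heps. destruct (H eps Heps) as [N HN]. exists N. intros n Hn. apply HN. lia.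
Qed.

Module MC.
From HB Require Import structures.
From mathcomp Require Import all_boot all_order all_algebra.
From mathcomp Require Import all_classical all_reals all_analysis.
From mathcomp Require Import measurable_realfun lebesgue_integral_theory.lebesgue_Rintegral Rstruct Rstruct_topology.
Import Order.TTheory GRing.Theory Num.Theory.
Import numFieldNormedType.Exports.
Local Open Scope classical_set_scope.
Local Open Scope ring_scope.
HB.instance Definition _ := NormedModule.copy R R^o.

Lemma Un_cv_cvg (u : nat -> R) l : Un_cv u l -> u @ \oo --> l.
Proof.
move=> H; apply/cvgrPdist_lt => e /RltP /H [N HN].
near=> n.
have nN : (n >= N)%coq_nat by apply/ssrnat.leP; near: n; exact: nbhs_infty_ge.
move: (HN n nN); rewrite /R_dist RabsE => /RltP; by rewrite distrC.
Unshelve. all: by end_near. Qed.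

Lemma cvg_Un_cv (u : nat -> R) l : u @ \oo --> l -> Un_cv u l.
Proof.
move/cvgrPdist_lt => H e /RltP /H [N _ HN].
exists N => n /ssrnat.leP nN; rewrite /R_dist RabsE; apply/RltP; rewrite distrC; exact: HN.
Qed.

Lemma derivable_pt_lim_derive (F : R -> R) x l : derivable_pt_lim F x l ->
  derivable F x 1 /\ derive1 F x = l.
Proof.
move=> H.
have dF : derivable F x 1.
  apply/cvg_ex; exists l.
  apply/cvgrPdist_lt => e /RltP e0.
  have [d dP] := H e e0.
  apply/nbhs_ballP; exists (pos d); first by apply/RltP; exact: cond_pos.
  move=> h /= hb hn0.
  have := dP h (fun E => (negP hn0) (introT eqP E)).
  have hd : (Rabs h < d)%coqR.
    apply/RltP; rewrite RabsE; move: hb; rewrite /ball /= sub0r normrN. done.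
  move=> /(_ hd) /RltP; rewrite /Rdiv /= RabsE.
  rewrite distrC.
  move=> Hh; apply: (le_lt_trans _ Hh); rewrite le_eqVlt; apply/orP; left; apply/eqP.
  congr (`|_ - _|). rewrite /GRing.scale /=. rewrite mulrC; congr (_ * _); congr (F _ - _).
  by rewrite addrC /GRing.scale /= mulr1.
split=> //; rewrite derive1E; apply: cvg_lim => //.
  apply/cvgrPdist_lt => e /RltP e0.
  have [d dP] := H e e0.
  apply/nbhs_ballP; exists (pos d); first by apply/RltP; exact: cond_pos.
  move=> h /= hb hn0.
  have := dP h (fun E => (negP hn0) (introT eqP E)).
  have hd : (Rabs h < d)%coqR.
    apply/RltP; rewrite RabsE; move: hb; rewrite /ball /= sub0r normrN. done.
  move=> /(_ hd) /RltP; rewrite /Rdiv /= RabsE.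
  rewrite distrC.
  move=> Hh; apply: (le_lt_trans _ Hh); rewrite le_eqVlt; apply/orP; left; apply/eqP.
  congr (`|_ - _|). rewrite /GRing.scale /=. rewrite mulrC; congr (_ * _); congr (F _ - _).
  by rewrite addrC /GRing.scale /= mulr1.
Qed.

Definition RI (a b : R) (f : R -> R) : R := Rintegral (@lebesgue_measure R) `[a, b] f.

Lemma cont_pt (f : R -> R) : (forall x, continuity_pt f x) -> continuous f.
Proof. by move=> H x; apply/continuity_ptE. Qed.

Lemma FTC (F f : R -> R) a b : (a < b)%coqR -> (forall x, derivable_pt_lim F x (f x)) ->
  (forall x, continuity_pt f x) -> RI a b f = (F b - F a)%coqR.
Proof.
move=> /RltP ab dF cf.
have cF : continuous F.
  apply: cont_pt => x; apply: (derivable_continuous_pt F x (exist _ (f x) (dF x))).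
rewrite /RI /Rintegral (@continuous_FTC2 _ f F a b ab).
- by [].
- exact/continuous_subspaceT/cont_pt.
- split.
  + by move=> x _; case: (derivable_pt_lim_derive _ _ _ (dF x)).
  + exact/cvg_at_right_filter/cF.
  + exact/cvg_at_left_filter/cF.
- by move=> x _; case: (derivable_pt_lim_derive _ _ _ (dF x)).
Qed.

Lemma null_negl (N : R -> Prop) : Defs.null_set N -> negligible (@lebesgue_measure R) N.
Proof.
move=> HN.
have /choice[ab Hab] : forall m : nat, exists ab : (nat -> R) * (nat -> R),
   (forall n, ab.1 n <= ab.2 n)%coqR /\ (forall x, N x -> exists n, ab.1 n < x < ab.2 n)%coqR /\
   (forall K, sum_f_R0 (fun n => ab.2 n - ab.1 n) K <= / INR (m.+1))%coqR.
  move=> m; have [|a [b H]] := HN (/ INR m.+1)%coqR.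
    apply: Rinv_0_lt_compat; apply: lt_0_INR; apply/ssrnat.ltP.  done.
  by exists (a, b).
pose B : set (measurableTypeR R) := \bigcap_m \bigcup_n `](ab m).1 n, (ab m).2 n[%classic.
have mB : measurable B.
  apply: bigcapT_measurable => m; apply: bigcupT_measurable => n; exact: measurable_itv.
exists B; split => //; last first.
  move=> x Nx m _; have [_ [/(_ x Nx) [n [h1 h2]] _]] := Hab m.
  exists n => //=; rewrite in_itv /=; apply/andP; split; apply/RltP => //.
apply/eqP; rewrite eq_le measure_ge0 andbT; apply/lee_addgt0Pr => e e0; rewrite add0e.
have [m me] : exists m : nat, (m.+1%:R)^-1 < e.
  exists (Num.bound e^-1).
  rewrite -(invrK e) ltf_pV2 ?posrE ?invr_gt0 //.
  apply: (lt_le_trans (archi_boundP _)); first by rewrite invr_ge0 ltW.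
  by rewrite invrK ler_nat.
have [ab0 [_ abs]] := Hab m.
apply: (@le_trans _ _ (lebesgue_measure (\bigcup_n `](ab m).1 n, (ab m).2 n[%classic))).
  apply: le_measure; rewrite ?inE //.
  - apply: bigcupT_measurable => n; exact: measurable_itv.
  - by move=> x /(_ m I).
have mF : forall n, measurable (`](ab m).1 n, (ab m).2 n[%classic : set (measurableTypeR R)).
  move=> n; exact: measurable_itv.
apply: (le_trans (measure_sigma_subadditive lebesgue_measure mF (bigcupT_measurable _ mF) (fun x h => h))).
apply: (@le_trans _ _ ((m.+1%:R)^-1)%:E); last by rewrite lee_fin ltW.
apply: lime_le; first by apply: is_cvg_nneseries => n _ _; exact: measure_ge0.
apply: nearW => K.
rewrite (eq_bigr (fun n => ((ab m).2 n - (ab m).1 n)%:E)); last first.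
  move=> n _; have := @lebesgue_measure_itv R (`](ab m).1 n, (ab m).2 n[); rewrite /= => ->; rewrite lte_fin; case: ifP => h.
    by rewrite EFinB.
  have := ab0 n => /RleP; rewrite le_eqVlt h orbF => /eqP ->.
  by rewrite subrr.
rewrite sumEFin lee_fin.
case: K => [|K]; first by rewrite big_geq // invr_ge0.
have := abs K => /RleP; rewrite sum_f_R0E INRE.
by [].
Qed.


Notation RM := (Real_sort__canonical__measurable_structure_SigmaRing R).
Definition mfR (f : R -> R) := measurable_fun (T:=RM) (U:=RM) setT f.

Lemma DCT (a b : R) (fs : nat -> R -> R) (f : R -> R) (N : R -> Prop) :
  Defs.null_set N -> (forall n, mfR (fs n)) -> mfR f ->
  (forall n t, (Rabs (fs n t) <= 1)%coqR) ->
  (forall t, (a <= t <= b)%coqR -> ~ N t -> Un_cv (fun n => fs n t) (f t)) ->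
  Un_cv (fun n => RI a b (fs n)) (RI a b f).
Proof.
move=> HN mfs mf bd cv.
have mD : measurable (`[a, b]%classic : set (measurableTypeR R)) by exact: measurable_itv.
have ig : lebesgue_measure.-integrable (`[a, b]%classic : set (measurableTypeR R)) (EFin \o (cst 1 : R -> R)).
  apply: continuous_compact_integrable; first exact: segment_compact.
  apply: continuous_subspaceT => x; exact: cst_continuous.
have := @dominated_convergence _ _ _ lebesgue_measure _ mD (fun n => EFin \o fs n) (EFin \o f) (EFin \o cst 1).
case.
- move=> n; apply/measurable_EFinP; apply: (measurable_funS _ _ (mfs n)) => //.
- apply/measurable_EFinP; apply: (measurable_funS _ _ mf) => //.
- have [B [mB B0 NB]] := null_negl _ HN; exists B; split => // x /= nP; apply: NB; apply: contrapT => Nx; apply: nP => Dx.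
  apply/fine_cvgP; split; first exact: nearW.
  apply: Un_cv_cvg; apply: cv => //.
  by move: Dx; rewrite /= in_itv /= => /andP[/RleP h1 /RleP h2].
- exact: ig.
- apply: aeW => x n _ /=; rewrite lee_fin -RabsE; apply/RleP; exact: bd.
move=> intf _ cvf.
apply: cvg_Un_cv; rewrite /RI /Rintegral.
apply: fine_cvg; rewrite fineK //; last exact: integrable_fin_num.
Qed.


Lemma mfR_cont (f : R -> R) : (forall x, continuity_pt f x) -> mfR f.
Proof. move=> H; apply: continuous_measurable_fun; exact: cont_pt. Qed.

Lemma mfR_lim (fs : nat -> R -> R) (f : R -> R) : (forall n, mfR (fs n)) ->
  (forall t, Un_cv (fun n => fs n t) (f t)) -> mfR f.
Proof.
move=> mfs cv; apply: (@measurable_fun_cvg _ RM R setT fs f mfs).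
move=> x _; apply: Un_cv_cvg; exact: cv.
Qed.

End MC.

Theorem lemma2p2p1 (mu : nat -> Z -> R)
  (Hprob : forall n, (1 <= n)%nat -> prob_Z (mu n))
  (H1 : exists alpha C, 0 < alpha /\ alpha <= 1 /\ 0 < C /\
        forall n, (1 <= n)%nat -> forall x y : Z,
          2 * Rabs (IZR y) <= Rabs (IZR x) ->
          Rabs (mu n (x + y)%Z - mu n x)
            <= C * rpow (Rabs (IZR y)) alpha / rpow (Rabs (IZR x)) (1 + alpha))
  (H2 : exists N : R -> Prop, null_set N /\
        forall t, -(1/2) <= t < 1/2 -> ~ N t ->
        exists re im : nat -> R,
          (forall n, (1 <= n)%nat -> fourier_re (mu n) t (re n)) /\
          (forall n, (1 <= n)%nat -> fourier_im (mu n) t (im n)) /\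
          Un_cv re 0 /\ Un_cv im 0) :
  exists L : nat -> R,
    (forall n, (1 <= n)%nat -> Zsum (fun k => Rabs (mu n k - mu n (k - 1)%Z)) (L n)) /\
    Un_cv L 0.
Proof.
destruct H1 as [a [C [Ha [Ha1 [HC Hb]]]]].
destruct H2 as [N [HN H2]].
apply (final_comb mu Hprob a C Ha HC Hb).
intro k. apply Un_cv_shift.
apply (mu_k_to_0 MC.mfR MC.RI MC.mfR_cont MC.mfR_lim MC.FTC MC.DCT (fun n => mu (S n))
   (fun n => Hprob (S n) (le_n_S 0 n (Nat.le_0_l n))) N HN).
intros t Ht HNt. destruct (H2 t Ht HNt) as [re [im [Hre [Him [Cre Cim]]]]].
exists (fun n => re (S n)), (fun n => im (S n)).
split; [|split; [|split]].
{ intro n. apply Hre. apply le_n_S, Nat.le_0_l. }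
{ intro n. apply Him. apply le_n_S, Nat.le_0_l. }
{ apply Un_cv_Sshift; exact Cre. }
{ apply Un_cv_Sshift; exact Cim. }
Qed.
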